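(* Let $\gamma\in(0.5,1)$ and let $a:[0,\infty)\to[0,\infty)$ be a decreasing, bounded, piecewise continuous function such that $\lim_{t\to\infty}t^{\gamma}a(t)$ exists and is positive. Then for any given $\mu>0$ and $p>2$, \[ e^{-\mu\int_0^t a(s)\,ds}=o\big(t^{-\frac{p\gamma}{2}}\big)\quad (t\to\infty), \] and \[ \lim_{t\to\infty} t^{\frac{p\gamma}{2}}\int_0^t a^{\frac{p+2}{2}}(s)\,e^{-\mu\int_s^t a(r)\,dr}\,ds=\frac{\big(\lim_{t\to\infty}t^{\gamma}a(t)\big)^{\frac{p}{2}}}{\mu}. \]
   Context: $f(t)=o(g(t))$ means $\limsup_{t\to\infty}|f(t)/g(t)|=0$. *)

(* Defs.v *)
From Stdlib Require Import Reals List.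
From Coquelicot Require Import Coquelicot.
Open Scope R_scope.

Definition decreasing_on_nonneg (a : R -> R) : Prop :=
  forall x y, 0 <= x -> x <= y -> a y <= a x.

Definition bounded_on_nonneg (a : R -> R) : Prop :=
  exists M, forall x, 0 <= x -> Rabs (a x) <= M.

Definition piecewise_continuous_on_nonneg (a : R -> R) : Prop :=
  forall b, 0 < b -> exists l : list R,
    (forall x, 0 < x < b -> ~ In x l -> continuous a x) /\
    (forall x, 0 <= x < b -> exists r, filterlim a (at_right x) (locally r)) /\
    (forall x, 0 < x <= b -> exists r, filterlim a (at_left x) (locally r)).

(* Main.v *)
Require Import Defs.
From Stdlib Require Import Reals List Lra Psatz.
From Coquelicot Require Import Coquelicot.
Open Scope R_scope.

Lemma split_ind (P : R -> R -> Prop) (l0 : list R) :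
  (forall u v, u <= v -> (forall z, u < z < v -> ~ In z l0) -> P u v) ->
  (forall u w v, u <= w -> w <= v -> P u w -> P w v -> P u v) ->
  forall u v, u <= v -> P u v.
Proof.
  intros Hb Hs.
  assert (H : forall l u v, u <= v -> (forall z, u < z < v -> In z l0 -> In z l) -> P u v).
  { induction l as [|w l IH]; intros u v Huv Hin.
    - apply Hb; [exact Huv|]. intros z Hz Hz'. exact (Hin z Hz Hz').
    - destruct (Rlt_dec u w) as [H1|H1]; [destruct (Rlt_dec w v) as [H2|H2]|].
      + apply (Hs u w v); try lra.
        * apply IH; [lra|]. intros y Hy Hy'. destruct (Hin y ltac:(lra) Hy') as [->|]; [lra|auto].
        * apply IH; [lra|]. intros y Hy Hy'. destruct (Hin y ltac:(lra) Hy') as [->|]; [lra|auto].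
      + apply IH; auto. intros y Hy Hy'. destruct (Hin y Hy Hy') as [->|]; [lra|auto].
      + apply IH; auto. intros y Hy Hy'. destruct (Hin y Hy Hy') as [->|]; [lra|auto]. }
  intros u v Huv. apply (H l0); auto.
Qed.

Lemma mono_pc (f df : R -> R) (l : list R) (u v : R) : u <= v ->
  (forall x, u <= x <= v -> continuity_pt f x) ->
  (forall x, u < x < v -> ~ In x l -> is_derive f x (df x) /\ 0 <= df x) ->
  f u <= f v.
Proof.
  intros Huv Hc Hd.
  cut (u <= u -> v <= v -> f u <= f v); [intros HH; apply HH; lra|].
  revert Huv. apply (split_ind (fun x y => u <= x -> y <= v -> f x <= f y) l).
  2:{ intros a b c H1 H2 H3 H4 H5 H6. specialize (H3 H5 ltac:(lra)). specialize (H4 ltac:(lra) H6). lra. }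
  intros x y Hxy Hnl Hux Hyv.
  destruct (Req_dec x y) as [->|Hne]; [lra|].
  set (dg := fun z => if Rlt_dec x z then if Rlt_dec z y then df z else 0 else 0).
  destruct (MVT_gen f x y dg) as [c [Hc1 Hc2]].
  - rewrite Rmin_left, Rmax_right by lra. intros z Hz.
    unfold dg. destruct (Rlt_dec x z); [|lra]. destruct (Rlt_dec z y); [|lra].
    apply Hd; [lra|]. apply Hnl; lra.
  - rewrite Rmin_left, Rmax_right by lra. intros z Hz. apply Hc; lra.
  - assert (0 <= dg c).
    { unfold dg. destruct (Rlt_dec x c); [|lra]. destruct (Rlt_dec c y); [|lra].
      apply Hd; [lra|]. apply Hnl; lra. }
    nra.
Qed.

Definition PC (f : R -> R) (b : R) (l : list R) : Prop :=
  (forall x, 0 < x < b -> ~ In x l -> continuous f x) /\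
  (forall x, 0 <= x < b -> exists r, filterlim f (at_right x) (locally r)) /\
  (forall x, 0 < x <= b -> exists r, filterlim f (at_left x) (locally r)).

Lemma ball_R (x e z : R) : ball x e z <-> Rabs (z - x) < e.
Proof. reflexivity. Qed.

Lemma PC_int_base f b l x y : PC f b l -> 0 <= x -> x < y -> y <= b ->
  (forall z, x < z < y -> ~ In z l) -> ex_RInt f x y.
Proof.
  intros [Hc [Hr Hl]] H0 Hxy Hyb Hnl.
  destruct (Hr x ltac:(lra)) as [r1 Hr1].
  destruct (Hl y ltac:(lra)) as [r2 Hr2].
  set (g := fun z : R => (if Rle_dec z x then (r1:R) else if Rle_dec y z then (r2:R) else f z) : R).
  apply (ex_RInt_ext g).
  { rewrite Rmin_left, Rmax_right by lra. intros z Hz. unfold g.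
    destruct (Rle_dec z x); [lra|]. destruct (Rle_dec y z); [lra|]. reflexivity. }
  apply (@ex_RInt_continuous R_CompleteNormedModule). rewrite Rmin_left, Rmax_right by lra.
  intros z Hz.
  destruct (Req_dec z x) as [->|Hzx]; [|destruct (Req_dec z y) as [->|Hzy]].
  - unfold continuous. apply filterlim_locally. intros eps.
    destruct (proj1 (@filterlim_locally _ _ _ (@filter_filter _ _ (at_right_proper_filter x)) f r1) Hr1 eps) as [d Hd].
    assert (Hp : 0 < Rmin d (y - x)) by (apply Rmin_glb_lt; [apply cond_pos|lra]).
    exists (mkposreal _ Hp). intros z Hz'. rewrite ball_R in Hz'. simpl in Hz'.
    assert (Hgx : g x = r1) by (unfold g; destruct (Rle_dec x x); [reflexivity|lra]).
    rewrite Hgx. unfold g. destruct (Rle_dec z x). { apply ball_center. }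
    destruct (Rle_dec y z).
    { exfalso. assert (Rabs (z - x) < y - x) by (eapply Rlt_le_trans; [exact Hz'|apply Rmin_r]).
      apply Rabs_def2 in H. lra. }
    apply Hd; [|lra]. rewrite ball_R. eapply Rlt_le_trans; [exact Hz'|apply Rmin_l].
  - unfold continuous. apply filterlim_locally. intros eps.
    destruct (proj1 (@filterlim_locally _ _ _ (@filter_filter _ _ (at_left_proper_filter y)) f r2) Hr2 eps) as [d Hd].
    assert (Hp : 0 < Rmin d (y - x)) by (apply Rmin_glb_lt; [apply cond_pos|lra]).
    exists (mkposreal _ Hp). intros z Hz'. rewrite ball_R in Hz'. simpl in Hz'.
    assert (Hgx : g y = r2) by (unfold g; destruct (Rle_dec y x); [lra|]; destruct (Rle_dec y y); [reflexivity|lra]).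
    rewrite Hgx. unfold g.
    assert (Rabs (z - y) < y - x) by (eapply Rlt_le_trans; [exact Hz'|apply Rmin_r]).
    apply Rabs_def2 in H.
    destruct (Rle_dec z x). { lra. }
    destruct (Rle_dec y z). { apply ball_center. }
    apply Hd; [|lra]. rewrite ball_R. eapply Rlt_le_trans; [exact Hz'|apply Rmin_l].
  - apply (continuous_ext_loc (g : R -> R_UniformSpace) f z).
    + assert (Hp : 0 < Rmin (z - x) (y - z)) by (apply Rmin_glb_lt; lra).
      exists (mkposreal _ Hp). intros w Hw. rewrite ball_R in Hw. simpl in Hw.
      assert (Rabs (w - z) < z - x) by (eapply Rlt_le_trans; [exact Hw|apply Rmin_l]).
      assert (Rabs (w - z) < y - z) by (eapply Rlt_le_trans; [exact Hw|apply Rmin_r]).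
      apply Rabs_def2 in H. apply Rabs_def2 in H1.
      unfold g. destruct (Rle_dec w x); [lra|]. destruct (Rle_dec y w); [lra|]. reflexivity.
    + apply Hc; [lra|]. apply Hnl; lra.
Qed.

Lemma PC_int f b l : PC f b l -> forall u v, 0 <= u -> u <= v -> v <= b -> ex_RInt f u v.
Proof.
  intros HP u v Hu Huv Hvb.
  revert Hu Hvb. revert u v Huv.
  apply (split_ind (fun x y => 0 <= x -> y <= b -> ex_RInt f x y) l).
  - intros x y Hxy Hnl H0 Hb. destruct (Req_dec x y) as [->|Hne]; [apply ex_RInt_point|].
    apply (PC_int_base f b l); auto; lra.
  - intros x w y H1 H2 H3 H4 H5 H6. apply ex_RInt_Chasles with w; [apply H3|apply H4]; lra.
Qed.

Lemma PC_comp (f k phi : R -> R) b l :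
  PC f b l ->
  (forall z, 0 < z -> continuous phi z) ->
  (forall x, 0 <= x <= b -> 0 < f x) ->
  (forall x r, 0 <= x < b -> filterlim f (at_right x) (locally r) -> 0 < r) ->
  (forall x r, 0 < x <= b -> filterlim f (at_left x) (locally r) -> 0 < r) ->
  (forall x, 0 < x <= b -> continuous k x) ->
  filterlim k (at_right 0) (locally (k 0)) ->
  PC (fun s => phi (f s) * k s) b l.
Proof.
  intros [Hc [Hr Hl]] Hphi Hf Hrp Hlp Hk Hk0.
  split; [|split].
  - intros x Hx Hnl. apply (continuous_mult (fun s => phi (f s)) k).
    + apply continuous_comp; [apply Hc; auto|]. apply Hphi, Hf; lra.
    + apply Hk; lra.
  - intros x Hx. destruct (Hr x Hx) as [r Hr'].
    exists (phi r * (if Req_EM_T x 0 then k 0 else k x)).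
    apply (filterlim_comp_2 (G:=locally (phi r)) (H:=locally (if Req_EM_T x 0 then k 0 else k x)) (fun s => phi (f s)) k Rmult).
    + eapply filterlim_comp; [exact Hr'|]. apply Hphi. eapply Hrp; eauto.
    + destruct (Req_EM_T x 0) as [->|Hne]; [exact Hk0|].
      eapply filterlim_filter_le_1; [apply filter_le_within|]. apply Hk; lra.
    + apply (@filterlim_mult R_AbsRing).
  - intros x Hx. destruct (Hl x Hx) as [r Hr'].
    exists (phi r * k x).
    apply (filterlim_comp_2 (G:=locally (phi r)) (H:=locally (k x)) (fun s => phi (f s)) k Rmult).
    + eapply filterlim_comp; [exact Hr'|]. apply Hphi. eapply Hlp; eauto.
    + eapply filterlim_filter_le_1; [apply filter_le_within|]. apply Hk; lra.
    + apply (@filterlim_mult R_AbsRing).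
Qed.

Lemma lim_ge_const (F : (R -> Prop) -> Prop) (FF : ProperFilter F) (f : R -> R) (m r : R) :
  F (fun z => m <= f z) -> filterlim f F (locally r) -> m <= r.
Proof.
  intros H1 H2.
  assert (Hle := @filterlim_le _ F (Proper_StrongProper _ FF) (fun _ => m) f m r H1
    (filterlim_const m) H2). simpl in Hle. exact Hle.
Qed.

Lemma a_int (a : R -> R) : piecewise_continuous_on_nonneg a ->
  forall u v, 0 <= u -> u <= v -> ex_RInt a u v.
Proof.
  intros Hpc u v Hu Huv. destruct (Hpc (v + 1) ltac:(lra)) as [l Hl].
  apply (PC_int a (v+1) l Hl); lra.
Qed.

Lemma a_rlim_pos (a : R -> R) : (forall x, 0 <= x -> 0 < a x) -> decreasing_on_nonneg a ->
  forall x r, 0 <= x -> filterlim a (at_right x) (locally r) -> 0 < r.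
Proof.
  intros Hpos Hdec x r Hx Hr.
  assert (a (x + 1) <= r).
  { apply (lim_ge_const (at_right x) (at_right_proper_filter x) a); auto.
    exists (mkposreal 1 Rlt_0_1). intros z Hz Hxz. rewrite ball_R in Hz. simpl in Hz.
    apply Rabs_def2 in Hz. apply Hdec; lra. }
  specialize (Hpos (x+1) ltac:(lra)). lra.
Qed.

Lemma a_llim_pos (a : R -> R) : (forall x, 0 <= x -> 0 < a x) -> decreasing_on_nonneg a ->
  forall x r, 0 < x -> filterlim a (at_left x) (locally r) -> 0 < r.
Proof.
  intros Hpos Hdec x r Hx Hr.
  assert (a x <= r).
  { apply (lim_ge_const (at_left x) (at_left_proper_filter x) a); auto.
    exists (mkposreal x Hx). intros z Hz Hxz. rewrite ball_R in Hz. simpl in Hz.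
    apply Rabs_def2 in Hz. apply Hdec; lra. }
  specialize (Hpos x ltac:(lra)). lra.
Qed.

Lemma A_cont (a : R -> R) : piecewise_continuous_on_nonneg a ->
  forall x, 0 < x -> continuous (fun z => RInt a 0 z) x.
Proof.
  intros Hpc x Hx. apply (continuous_RInt_1 a 0 x).
  exists (mkposreal x Hx). intros z Hz. rewrite ball_R in Hz. simpl in Hz.
  apply Rabs_def2 in Hz. apply (@RInt_correct R_CompleteNormedModule). apply a_int; auto; lra.
Qed.

Lemma A_rcont0 (a : R -> R) : (forall x, 0 <= x -> 0 < a x) -> decreasing_on_nonneg a ->
  piecewise_continuous_on_nonneg a ->
  filterlim (fun z => RInt a 0 z) (at_right 0) (locally (RInt a 0 0)).
Proof.
  intros Hpos Hdec Hpc. rewrite RInt_point. apply filterlim_locally. intros eps.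
  assert (H0 := Hpos 0 (Rle_refl 0)).
  assert (Hp : 0 < Rmin 1 (eps / (a 0 + 1))).
  { apply Rmin_glb_lt; [lra|]. apply Rdiv_lt_0_compat; [apply cond_pos|lra]. }
  exists (mkposreal _ Hp). intros z Hz Hz0. rewrite ball_R in Hz. simpl in Hz.
  rewrite ball_R. unfold zero; simpl.
  assert (Hz1 : Rabs (z - 0) < 1) by (eapply Rlt_le_trans; [exact Hz|apply Rmin_l]).
  assert (Hz2 : Rabs (z - 0) < eps / (a 0 + 1)) by (eapply Rlt_le_trans; [exact Hz|apply Rmin_r]).
  rewrite Rminus_0_r in Hz1, Hz2 |- *. rewrite Rabs_pos_eq in Hz1, Hz2 by lra.
  assert (Hb := abs_RInt_le_const a 0 z (a 0) ltac:(lra) (a_int a Hpc 0 z ltac:(lra) ltac:(lra))).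
  assert (Rabs (RInt a 0 z) <= (z - 0) * a 0).
  { apply Hb. intros t Ht. rewrite Rabs_pos_eq. apply Hdec; lra. left; apply Hpos; lra. }
  assert (Hez : z * (a 0 + 1) < eps).
  { apply (Rmult_lt_compat_r (a 0 + 1)) in Hz2; [|lra]. unfold Rdiv in Hz2.
    rewrite Rmult_assoc, Rinv_l, Rmult_1_r in Hz2 by lra. exact Hz2. }
  nra.
Qed.

Lemma Rpower_cont (q z : R) : 0 < z -> continuous (fun y => Rpower y q) z.
Proof.
  intros Hz. apply (@ex_derive_continuous R_AbsRing R_NormedModule). exists (q * Rpower z (q - 1)).
  apply is_derive_Reals. apply derivable_pt_lim_power; auto.
Qed.

Lemma expmu_cont (mu z : R) : continuous (fun y => exp (mu * y)) z.
Proof. apply (@ex_derive_continuous R_AbsRing R_NormedModule). auto_derive. auto. Qed.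

Lemma E_cont (a : R -> R) mu : piecewise_continuous_on_nonneg a ->
  forall x, 0 < x -> continuous (fun s => exp (mu * RInt a 0 s)) x.
Proof.
  intros Hpc x Hx. apply (continuous_comp (fun s => RInt a 0 s) (fun y => exp (mu * y))).
  - apply A_cont; auto.
  - apply expmu_cont.
Qed.

Lemma h_PC (a : R -> R) mu q : (forall x, 0 <= x -> 0 < a x) -> decreasing_on_nonneg a ->
  piecewise_continuous_on_nonneg a -> forall b, 0 < b -> exists l, PC a b l /\
  PC (fun s => Rpower (a s) q * exp (mu * RInt a 0 s)) b l.
Proof.
  intros Hpos Hdec Hpc b Hb. destruct (Hpc b Hb) as [l Hl]. exists l. split; [exact Hl|].
  apply (PC_comp a (fun s => exp (mu * RInt a 0 s)) (fun y => Rpower y q) b l Hl).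
  - intros; apply Rpower_cont; auto.
  - intros; apply Hpos; lra.
  - intros x r Hx Hr. apply (a_rlim_pos a Hpos Hdec x r); auto; lra.
  - intros x r Hx Hr. apply (a_llim_pos a Hpos Hdec x r); auto; lra.
  - intros x Hx. apply E_cont; auto; lra.
  - apply (filterlim_comp _ _ _ (fun s => RInt a 0 s) (fun y => exp (mu * y)) _ (locally (RInt a 0 0))).
    + apply A_rcont0; auto.
    + apply expmu_cont.
Qed.

Lemma h_int (a : R -> R) mu q : (forall x, 0 <= x -> 0 < a x) -> decreasing_on_nonneg a ->
  piecewise_continuous_on_nonneg a -> forall u v, 0 <= u -> u <= v ->
  ex_RInt (fun s => Rpower (a s) q * exp (mu * RInt a 0 s)) u v.
Proof.
  intros Hpos Hdec Hpc u v Hu Huv. destruct (h_PC a mu q Hpos Hdec Hpc (v+1) ltac:(lra)) as [l [_ Hl]].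
  apply (PC_int _ (v+1) l Hl); lra.
Qed.

Lemma RInt_cont_gen (f : R -> R) x : 0 < x -> (forall u v, 0 <= u -> u <= v -> ex_RInt f u v) ->
  continuous (fun z => RInt f 0 z) x.
Proof.
  intros Hx Hf. apply (continuous_RInt_1 f 0 x).
  exists (mkposreal x Hx). intros z Hz. rewrite ball_R in Hz. simpl in Hz.
  apply Rabs_def2 in Hz. apply (@RInt_correct R_CompleteNormedModule). apply Hf; lra.
Qed.

Lemma RInt_deriv_gen (f : R -> R) x : 0 < x -> (forall u v, 0 <= u -> u <= v -> ex_RInt f u v) ->
  continuous f x -> is_derive (fun z => RInt f 0 z) x (f x).
Proof.
  intros Hx Hf Hc. apply (is_derive_RInt f (fun z => RInt f 0 z) 0 x); auto.
  exists (mkposreal x Hx). intros z Hz. rewrite ball_R in Hz. simpl in Hz.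
  apply Rabs_def2 in Hz. apply (@RInt_correct R_CompleteNormedModule). apply Hf; lra.
Qed.

Lemma E_deriv (a : R -> R) mu x : 0 < x -> piecewise_continuous_on_nonneg a ->
  continuous a x ->
  is_derive (fun s => exp (mu * RInt a 0 s)) x (mu * a x * exp (mu * RInt a 0 x)).
Proof.
  intros Hx Hpc Hc.
  assert (HA := RInt_deriv_gen a x Hx (a_int a Hpc) Hc).
  assert (H := is_derive_comp exp (fun s => mu * RInt a 0 s) x _ _ (is_derive_exp _) (is_derive_scal _ x mu _ HA)).
  simpl in H. exact H.
Qed.

Lemma psi_deriv (a : R -> R) mu be x : 0 < x -> piecewise_continuous_on_nonneg a ->
  continuous a x ->
  is_derive (fun s => Rpower s (- be) * exp (mu * RInt a 0 s)) x
    ((- be) * Rpower x (- be - 1) * exp (mu * RInt a 0 x) +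
     Rpower x (- be) * (mu * a x * exp (mu * RInt a 0 x))).
Proof.
  intros Hx Hpc Hc.
  apply (is_derive_mult (fun s => Rpower s (- be)) (fun s => exp (mu * RInt a 0 s))).
  - apply is_derive_Reals. apply derivable_pt_lim_power; auto.
  - apply E_deriv; auto.
  - intros; apply Rmult_comm.
Qed.

Lemma lim_eps (f : R -> R) (L : R) : is_lim f p_infty L ->
  forall eps, 0 < eps -> exists M, forall s, M < s -> Rabs (f s - L) < eps.
Proof.
  intros H eps Heps. apply is_lim_spec in H. exact (H (mkposreal eps Heps)).
Qed.

Lemma A_lower (a : R -> R) (gamma L : R) : gamma < 1 ->
  (forall x, 0 <= x -> 0 < a x) -> decreasing_on_nonneg a ->
  piecewise_continuous_on_nonneg a -> 0 < L ->
  is_lim (fun t => Rpower t gamma * a t) p_infty L ->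
  exists T, 0 < T /\ forall t, T < t -> L / 4 * exp ((1 - gamma) * ln t) <= RInt a 0 t.
Proof.
  intros Hg Hpos Hdec Hpc HL Hlim.
  destruct (lim_eps _ _ Hlim (L/2) ltac:(lra)) as [T0 HT0].
  set (T1 := Rmax T0 1 + 1).
  assert (HT1 : 1 < T1 /\ T0 < T1) by (unfold T1; split; [pose proof (Rmax_r T0 1)|pose proof (Rmax_l T0 1)]; lra).
  exists (2 * T1). split; [lra|]. intros t Ht.
  assert (Hat : L / 2 < Rpower t gamma * a t).
  { specialize (HT0 t ltac:(lra)). apply Rabs_def2 in HT0. lra. }
  assert (HAt : (t - T1) * a t <= RInt a 0 t).
  { rewrite <- (RInt_Chasles a 0 T1 t) by (apply a_int; auto; lra).
    assert (H1 : 0 <= RInt a 0 T1).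
    { apply RInt_ge_0; [lra| apply a_int; auto; lra|]. intros; left; apply Hpos; lra. }
    assert (H2 : RInt (fun _ => a t) T1 t <= RInt a T1 t).
    { apply RInt_le; [lra| apply ex_RInt_const | apply a_int; auto; lra|].
      intros x Hx. apply Hdec; lra. }
    rewrite RInt_const in H2. simpl in H2. change (plus (RInt a 0 T1) (RInt a T1 t)) with (RInt a 0 T1 + RInt a T1 t).
    unfold scal in H2; simpl in H2; unfold mult in H2; simpl in H2. lra. }
  assert (Htp : 0 < t) by lra.
  unfold Rpower in Hat.
  set (y := ln t) in *.
  assert (Hty : t = exp y) by (unfold y; rewrite exp_ln; auto).
  assert (Hd : exp ((1 - gamma) * y) = t * / exp (gamma * y)).
  { replace ((1 - gamma) * y) with (y + - (gamma * y)) by ring. rewrite exp_plus, exp_Ropp, <- Hty. reflexivity. }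
  rewrite Hd.
  assert (He := exp_pos (gamma * y)).
  assert (Ha2 : L / 2 * / exp (gamma * y) < a t).
  { apply (Rmult_lt_reg_l (exp (gamma * y))); auto. rewrite <- Rmult_assoc, (Rmult_comm _ (L/2)), Rmult_assoc, Rinv_r by lra. lra. }
  assert (Hi := Rinv_0_lt_compat _ He).
  assert (t / 2 <= t - T1) by lra.
  assert (0 < L / 2 * / exp (gamma * y)) by (apply Rmult_lt_0_compat; lra).
  assert (t / 2 * (L / 2 * / exp (gamma * y)) <= (t - T1) * a t).
  { apply Rmult_le_compat; lra. }
  replace (L / 4 * (t * / exp (gamma * y))) with (t / 2 * (L / 2 * / exp (gamma * y))) by (field; lra).
  lra.
Qed.

Lemma G_lim (a : R -> R) (gamma L mu be : R) : gamma < 1 ->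
  (forall x, 0 <= x -> 0 < a x) -> decreasing_on_nonneg a ->
  piecewise_continuous_on_nonneg a -> 0 < L ->
  is_lim (fun t => Rpower t gamma * a t) p_infty L -> 0 < mu ->
  forall eps, 0 < eps -> exists M, forall t, M < t ->
    Rpower t be * exp (- (mu * RInt a 0 t)) < eps.
Proof.
  intros Hg Hpos Hdec Hpc HL Hlim Hmu eps Heps.
  destruct (A_lower a gamma L Hg Hpos Hdec Hpc HL Hlim) as [T [HT HA]].
  set (de := 1 - gamma).
  set (k := mu * (L / 4) * (de * de / 4)).
  assert (Hk : 0 < k) by (unfold k, de; apply Rmult_lt_0_compat; [nra|]; apply Rmult_lt_0_compat; nra).
  set (Y := Rmax 1 ((Rabs be + Rabs (ln eps) + 1) / k)).
  exists (Rmax T (exp Y)). intros t Ht.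
  assert (HtT : T < t) by (eapply Rle_lt_trans; [apply Rmax_l|exact Ht]).
  assert (HtY : exp Y < t) by (eapply Rle_lt_trans; [apply Rmax_r|exact Ht]).
  assert (Hy : Y < ln t) by (rewrite <- (ln_exp Y); apply ln_increasing; [apply exp_pos|auto]).
  specialize (HA t HtT). unfold Rpower. rewrite <- exp_plus.
  rewrite <- (exp_ln eps) by auto. apply exp_increasing.
  set (y := ln t) in *. fold de in HA.
  assert (HY1 : 1 <= Y) by apply Rmax_l.
  assert (HY2 : (Rabs be + Rabs (ln eps) + 1) / k <= Y) by apply Rmax_r.
  assert (Hsq : (de * y / 2) * (de * y / 2) < exp (de * y)).
  { replace (de * y) with (de * y / 2 + de * y / 2) at 3 by field.
    rewrite exp_plus. assert (0 < de * y / 2) by (unfold de; nra).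
    assert (H1 := exp_ineq1 (de * y / 2) ltac:(lra)). nra. }
  assert (Hky : Rabs be + Rabs (ln eps) + 1 <= k * y).
  { apply (Rmult_le_compat_r k) in HY2; [|lra]. unfold Rdiv in HY2.
    rewrite Rmult_assoc, Rinv_l, Rmult_1_r in HY2 by lra. nra. }
  assert (Hb1 := Rle_abs be). assert (Hb2 := Rle_abs (- ln eps)). rewrite Rabs_Ropp in Hb2.
  assert (HmL : 0 < mu * (L / 4)) by nra.
  assert (mu * (L / 4) * ((de * y / 2) * (de * y / 2)) <= mu * (L / 4) * exp (de * y)).
  { apply Rmult_le_compat_l; lra. }
  assert (Hy1 : 1 <= y) by lra.
  assert (be * y <= Rabs be * y) by (apply Rmult_le_compat_r; lra).
  assert ((Rabs be + Rabs (ln eps) + 1) * y <= (k * y) * y) by (apply Rmult_le_compat_r; lra).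
  assert ((Rabs (ln eps) + 1) * 1 <= (Rabs (ln eps) + 1) * y).
  { apply Rmult_le_compat_l; [pose proof (Rabs_pos (ln eps)); lra|lra]. }
  assert (be * y - k * y * y <= - (Rabs (ln eps) + 1)) by nra.
  assert (k * y * y = mu * (L / 4) * ((de * y / 2) * (de * y / 2))) by (unfold k; field).
  nra.
Qed.

Lemma sandwich (a : R -> R) (L mu c be eta T t : R) (l : list R) :
  0 < L -> 0 < mu -> 0 < be -> 0 < eta -> be * eta / mu <= 1 / 2 -> eta <= 1 / 2 ->
  0 < T -> T < t ->
  (forall x, 0 <= x -> 0 < a x) -> decreasing_on_nonneg a ->
  piecewise_continuous_on_nonneg a ->
  PC a (t + 1) l ->
  PC (fun s => Rpower (a s) (c + 1) * exp (mu * RInt a 0 s)) (t + 1) l ->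
  (forall s, T <= s -> (1 - eta) * Rpower L c * Rpower s (- be) <= Rpower (a s) c <=
                       (1 + eta) * Rpower L c * Rpower s (- be)) ->
  (forall s, T <= s -> 1 <= eta * s * a s) ->
  let J := fun z => RInt (fun s => Rpower (a s) (c + 1) * exp (mu * RInt a 0 s)) 0 z in
  let psi := fun z => Rpower z (- be) * exp (mu * RInt a 0 z) in
  (1 - eta) * (Rpower L c / mu) * (psi t - psi T) <= J t - J T /\
  (1 - be * eta / mu) * (J t - J T) <= (1 + eta) * (Rpower L c / mu) * (psi t - psi T).
Proof.
  intros HL Hmu Hbe Heta Hx Heta2 HT HTt Hpos Hdec Hpc HPa HPh Hi Hii J psi.
  set (h := fun s => Rpower (a s) (c + 1) * exp (mu * RInt a 0 s)) in *.
  assert (Hhint : forall u v, 0 <= u -> u <= v -> ex_RInt h u v) by (apply h_int; auto).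
  assert (HLc : 0 < Rpower L c) by apply exp_pos.
  set (K := Rpower L c / mu).
  assert (HK : 0 < K) by (unfold K; apply Rdiv_lt_0_compat; auto).
  assert (HKm : K * mu = Rpower L c) by (unfold K; field; lra).
  clearbody K.
  assert (Hcont : forall x, T <= x <= t -> continuous J x /\ continuous psi x).
  { intros x Hx'. split.
    - apply RInt_cont_gen; auto; lra.
    - apply (continuous_mult (fun z => Rpower z (- be)) (fun z => exp (mu * RInt a 0 z))).
      + apply Rpower_cont; lra.
      + apply E_cont; auto; lra. }
  assert (Hder : forall x, T < x < t -> ~ In x l ->
     is_derive J x (h x) /\
     is_derive psi x ((- be) * Rpower x (- be - 1) * exp (mu * RInt a 0 x) +
                      Rpower x (- be) * (mu * a x * exp (mu * RInt a 0 x))) /\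
     h x = Rpower (a x) c * a x * exp (mu * RInt a 0 x) /\
     Rpower x (- be - 1) = Rpower x (- be) * / x).
  { intros x Hx' Hnl. destruct HPa as [Hca _]. destruct HPh as [Hch _].
    assert (Hax : continuous a x) by (apply Hca; auto; lra).
    split; [|split; [|split]].
    - apply RInt_deriv_gen; auto; try lra. apply Hch; auto; lra.
    - apply psi_deriv; auto; lra.
    - unfold h. rewrite (Rpower_plus c 1 (a x)). rewrite (Rpower_1 (a x)) by (apply Hpos; lra). reflexivity.
    - unfold Rminus. rewrite Rpower_plus, (Rpower_Ropp x 1), (Rpower_1 x) by lra. reflexivity. }
  split.
  - set (f1 := fun z => J z - (1 - eta) * K * psi z).
    assert (f1 T <= f1 t); [|unfold f1 in *; lra].
    apply (mono_pc f1 (fun x => h x - (1 - eta) * K * ((- be) * Rpower x (- be - 1) * exp (mu * RInt a 0 x) +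
                      Rpower x (- be) * (mu * a x * exp (mu * RInt a 0 x)))) l); [lra| |].
    + intros x Hx'. apply continuity_pt_filterlim. destruct (Hcont x Hx') as [C1 C2].
      apply (continuous_minus J (fun z => (1 - eta) * K * psi z)); auto.
      apply (continuous_scal_r ((1 - eta) * K) psi); auto.
    + intros x Hx' Hnl. destruct (Hder x Hx' Hnl) as [D1 [D2 [D3 D4]]]. split.
      * apply (is_derive_minus J (fun z => (1 - eta) * K * psi z)); auto.
        apply (is_derive_scal psi x ((1 - eta) * K)); auto.
      * rewrite D3, D4. destruct (Hi x ltac:(lra)) as [Hi1 Hi2].
        assert (HP := exp_pos (- be * ln x)). fold (Rpower x (- be)) in HP.
        assert (HE := exp_pos (mu * RInt a 0 x)).
        assert (Hax := Hpos x ltac:(lra)).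
        assert (Hxi : 0 < / x) by (apply Rinv_0_lt_compat; lra).
        set (P := Rpower x (- be)) in *. set (E := exp (mu * RInt a 0 x)) in *.
        set (Q := Rpower (a x) c) in *. set (A := a x) in *.
        assert (0 <= A * E * (Q - (1 - eta) * Rpower L c * P)).
        { apply Rmult_le_pos; [|lra]. apply Rmult_le_pos; lra. }
        assert (0 <= (1 - eta) * K * be * (P * / x) * E).
        { repeat apply Rmult_le_pos; try lra; try (left; assumption). }
        nra.
  - set (f2 := fun z => (1 + eta) * K * psi z - (1 - be * eta / mu) * J z).
    assert (f2 T <= f2 t); [|unfold f2 in *; lra].
    apply (mono_pc f2 (fun x => (1 + eta) * K * ((- be) * Rpower x (- be - 1) * exp (mu * RInt a 0 x) +
                      Rpower x (- be) * (mu * a x * exp (mu * RInt a 0 x))) - (1 - be * eta / mu) * h x) l); [lra| |].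
    + intros x Hx'. apply continuity_pt_filterlim. destruct (Hcont x Hx') as [C1 C2].
      apply (continuous_minus (fun z => (1 + eta) * K * psi z) (fun z => (1 - be * eta / mu) * J z)).
      * apply (continuous_scal_r ((1 + eta) * K) psi); auto.
      * apply (continuous_scal_r (1 - be * eta / mu) J); auto.
    + intros x Hx' Hnl. destruct (Hder x Hx' Hnl) as [D1 [D2 [D3 D4]]]. split.
      * apply (is_derive_minus (fun z => (1 + eta) * K * psi z) (fun z => (1 - be * eta / mu) * J z)).
        -- apply (is_derive_scal psi x ((1 + eta) * K)); auto.
        -- apply (is_derive_scal J x (1 - be * eta / mu)); auto.
      * rewrite D3, D4. destruct (Hi x ltac:(lra)) as [Hi1 Hi2].
        assert (Hii' := Hii x ltac:(lra)).
        assert (HP := exp_pos (- be * ln x)). fold (Rpower x (- be)) in HP.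
        assert (HE := exp_pos (mu * RInt a 0 x)).
        assert (Hax := Hpos x ltac:(lra)).
        assert (Hxi : 0 < / x) by (apply Rinv_0_lt_compat; lra).
        set (P := Rpower x (- be)) in *. set (E := exp (mu * RInt a 0 x)) in *.
        set (Q := Rpower (a x) c) in *. set (A := a x) in *.
        assert (Hinvx : / x <= eta * A).
        { apply (Rmult_le_reg_l x); [lra|]. rewrite Rinv_r by lra. nra. }
        assert (Hm : 0 <= 1 - be * eta / mu) by lra.
        assert (0 <= (1 - be * eta / mu) * (A * E * ((1 + eta) * Rpower L c * P - Q))).
        { apply Rmult_le_pos; auto. apply Rmult_le_pos; [apply Rmult_le_pos; lra|lra]. }
        assert (0 <= (1 + eta) * K * be * P * E * (eta * A - / x)).
        { repeat apply Rmult_le_pos; try lra; try (left; assumption). }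
        rewrite <- HKm in *.
        match goal with |- 0 <= ?X => assert (Heq : X =
          (1 - be * eta / mu) * (A * E * ((1 + eta) * (K * mu) * P - Q)) +
          (1 + eta) * K * be * P * E * (eta * A - / x)) end.
        { field; lra. }
        rewrite Heq. lra.
Qed.

Lemma T_exists (a : R -> R) (gamma L c be eta : R) : 0 < gamma < 1 ->
  (forall x, 0 <= x -> 0 < a x) -> 0 < L -> 0 < eta ->
  is_lim (fun t => Rpower t gamma * a t) p_infty L -> be = gamma * c ->
  exists T, 0 < T /\
  (forall s, T <= s -> (1 - eta) * Rpower L c * Rpower s (- be) <= Rpower (a s) c <=
                       (1 + eta) * Rpower L c * Rpower s (- be)) /\
  (forall s, T <= s -> 1 <= eta * s * a s).
Proof.
  intros Hg Hpos HL Heta Hlim Hbe.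
  assert (HLc : 0 < Rpower L c) by apply exp_pos.
  assert (Hc := Rpower_cont c L HL).
  destruct (proj1 (filterlim_locally _ _) Hc (mkposreal (eta * Rpower L c) ltac:(apply Rmult_lt_0_compat; lra))) as [d Hd].
  destruct (lim_eps _ _ Hlim d (cond_pos d)) as [T0 HT0].
  destruct (lim_eps _ _ Hlim (L/2) ltac:(lra)) as [T1 HT1].
  set (T2 := exp (2 / (eta * L * (1 - gamma)))).
  exists (Rmax (Rmax T0 T1) (Rmax T2 0) + 1).
  assert (H1 := Rmax_l (Rmax T0 T1) (Rmax T2 0)). assert (H2 := Rmax_r (Rmax T0 T1) (Rmax T2 0)).
  assert (H3 := Rmax_l T0 T1). assert (H4 := Rmax_r T0 T1). assert (H5 := Rmax_l T2 0). assert (H6 := Rmax_r T2 0).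
  split; [lra|split].
  - intros s Hs.
    assert (Hs0 : 0 < s) by lra.
    assert (Has := Hpos s ltac:(lra)).
    assert (Hsg := exp_pos (gamma * ln s)). fold (Rpower s gamma) in Hsg.
    assert (HX : 0 < Rpower s gamma * a s) by (apply Rmult_lt_0_compat; auto).
    assert (HY : 0 < Rpower s (- gamma)) by apply exp_pos.
    assert (Hid : Rpower (a s) c = Rpower (Rpower s gamma * a s) c * Rpower s (- be)).
    { rewrite Hbe. replace (- (gamma * c)) with (- gamma * c) by ring.
      rewrite <- Rpower_mult, Rpower_mult_distr by auto. f_equal.
      rewrite Rpower_Ropp. field. lra. }
    assert (Hb : Rabs (Rpower (Rpower s gamma * a s) c - Rpower L c) < eta * Rpower L c).
    { apply (Hd (Rpower s gamma * a s)). rewrite ball_R. apply HT0. lra. }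
    apply Rabs_def2 in Hb.
    assert (HP : 0 < Rpower s (- be)) by apply exp_pos.
    rewrite Hid. split; nra.
  - intros s Hs.
    assert (Hs0 : 0 < s) by lra.
    assert (Has := Hpos s ltac:(lra)).
    assert (Hb := HT1 s ltac:(lra)). apply Rabs_def2 in Hb.
    assert (Hln : 2 / (eta * L * (1 - gamma)) < ln s).
    { rewrite <- (ln_exp (2 / (eta * L * (1 - gamma)))). apply ln_increasing; [apply exp_pos|fold T2; lra]. }
    assert (Hg' : 0 < 1 - gamma) by lra.
    assert (Hln2 : 2 / (eta * L) < (1 - gamma) * ln s).
    { replace (2 / (eta * L)) with ((1 - gamma) * (2 / (eta * L * (1 - gamma)))) by (field; lra).
      apply Rmult_lt_compat_l; auto. }
    assert (Hpos2 : 0 < 2 / (eta * L)) by (apply Rdiv_lt_0_compat; nra).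
    assert (Hexp := exp_ineq1 ((1 - gamma) * ln s) ltac:(lra)).
    assert (Hss : s = exp ((1 - gamma) * ln s) * Rpower s gamma).
    { unfold Rpower. rewrite <- exp_plus. replace ((1 - gamma) * ln s + gamma * ln s) with (ln s) by ring.
      rewrite exp_ln; auto. }
    assert (Hsga : L / 2 < Rpower s gamma * a s) by lra.
    assert (eta * (2 / (eta * L)) * (L / 2) = 1) by (field; lra).
    assert (Heq : eta * s * a s = eta * (exp ((1 - gamma) * ln s) * (Rpower s gamma * a s))).
    { rewrite Hss at 1. ring. }
    rewrite Heq.
    assert (exp ((1 - gamma) * ln s) > 2 / (eta * L)) by lra.
    assert (Hq : 2 / (eta * L) * (L / 2) <= exp ((1 - gamma) * ln s) * (Rpower s gamma * a s)).
    { apply Rmult_le_compat; lra. }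
    apply (Rmult_le_compat_l eta) in Hq; lra.
Qed.

Lemma a_pos (a : R -> R) (gamma L : R) : (forall x, 0 <= x -> 0 <= a x) ->
  decreasing_on_nonneg a -> 0 < L -> is_lim (fun t => Rpower t gamma * a t) p_infty L ->
  forall x, 0 <= x -> 0 < a x.
Proof.
  intros Hnn Hdec HL Hlim x Hx.
  destruct (Rle_lt_dec (a x) 0) as [H|H]; [|exact H].
  exfalso. destruct (lim_eps _ _ Hlim (L/2) ltac:(lra)) as [M HM].
  set (t := Rmax M x + 1).
  assert (Ht1 : M < t) by (unfold t; pose proof (Rmax_l M x); lra).
  assert (Ht2 : x <= t) by (unfold t; pose proof (Rmax_r M x); lra).
  assert (Hat : a t = 0) by (pose proof (Hdec x t Hx Ht2); pose proof (Hnn t ltac:(lra)); lra).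
  specialize (HM t Ht1). rewrite Hat, Rmult_0_r, Rminus_0_l, Rabs_Ropp, Rabs_pos_eq in HM; lra.
Qed.

Lemma rewrite_F (a : R -> R) (mu c t : R) :
  (forall x, 0 <= x -> 0 < a x) -> decreasing_on_nonneg a ->
  piecewise_continuous_on_nonneg a -> 0 < t ->
  RInt (fun s => Rpower (a s) (c + 1) * exp (- mu * RInt a s t)) 0 t =
  exp (- (mu * RInt a 0 t)) * RInt (fun s => Rpower (a s) (c + 1) * exp (mu * RInt a 0 s)) 0 t.
Proof.
  intros Hpos Hdec Hpc Ht.
  rewrite (RInt_ext _ (fun s => scal (exp (- (mu * RInt a 0 t))) (Rpower (a s) (c + 1) * exp (mu * RInt a 0 s)))).
  - rewrite (@RInt_scal R_CompleteNormedModule). reflexivity. apply h_int; auto; lra.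
  - rewrite Rmin_left, Rmax_right by lra. intros s Hs.
    assert (HC := RInt_Chasles a 0 s t (a_int a Hpc 0 s ltac:(lra) ltac:(lra)) (a_int a Hpc s t ltac:(lra) ltac:(lra))).
    change (plus (RInt a 0 s) (RInt a s t)) with (RInt a 0 s + RInt a s t) in HC.
    assert (HE : RInt a s t = RInt a 0 t - RInt a 0 s) by lra.
    rewrite HE. change (scal (exp (- (mu * RInt a 0 t))) (Rpower (a s) (c + 1) * exp (mu * RInt a 0 s)))
      with (exp (- (mu * RInt a 0 t)) * (Rpower (a s) (c + 1) * exp (mu * RInt a 0 s))).
    replace (- mu * (RInt a 0 t - RInt a 0 s)) with (- (mu * RInt a 0 t) + mu * RInt a 0 s) by ring.
    rewrite exp_plus. lazymatch goal with |- ?x = ?y => change (@eq R x y) end; ring.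
Qed.

Theorem lemma2 (gamma : R) (a : R -> R) (L mu p : R) :
  1 / 2 < gamma < 1 ->
  (forall x, 0 <= x -> 0 <= a x) ->
  decreasing_on_nonneg a ->
  bounded_on_nonneg a ->
  piecewise_continuous_on_nonneg a ->
  0 < L ->
  is_lim (fun t => Rpower t gamma * a t) p_infty L ->
  0 < mu -> 2 < p ->
  (* e^{-mu int_0^t a} = o(t^{-p gamma/2}) *)
  is_lim (fun t => Rabs (exp (- mu * RInt a 0 t) / Rpower t (- (p * gamma / 2))))
    p_infty 0 /\
  is_lim (fun t => Rpower t (p * gamma / 2) *
      RInt (fun s => Rpower (a s) ((p + 2) / 2) * exp (- mu * RInt a s t)) 0 t)
    p_infty (Rpower L (p / 2) / mu).
Proof.
  intros Hg Hnn Hdec _ Hpc HL Hlim Hmu Hp.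
  assert (Hpos := a_pos a gamma L Hnn Hdec HL Hlim).
  set (be := p * gamma / 2). set (c := p / 2).
  assert (Hbe : 0 < be) by (unfold be; nra).
  assert (Hbec : be = gamma * c) by (unfold be, c; field).
  assert (HG := G_lim a gamma L mu be ltac:(lra) Hpos Hdec Hpc HL Hlim Hmu).
  split.
  - apply is_lim_spec. intros eps. simpl.
    destruct (HG eps (cond_pos eps)) as [M HM].
    exists (Rmax M 0). intros t Ht.
    assert (Ht1 : M < t) by (pose proof (Rmax_l M 0); lra).
    assert (Ht0 : 0 < t) by (pose proof (Rmax_r M 0); lra).
    specialize (HM t Ht1).
    assert (Heq : exp (- mu * RInt a 0 t) / Rpower t (- be) = Rpower t be * exp (- (mu * RInt a 0 t))).
    { rewrite Rpower_Ropp. replace (- mu * RInt a 0 t) with (- (mu * RInt a 0 t)) by ring.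
      assert (0 < Rpower t be) by apply exp_pos. field. lra. }
    rewrite Rminus_0_r, Heq.
    assert (0 < Rpower t be * exp (- (mu * RInt a 0 t))) by (apply Rmult_lt_0_compat; apply exp_pos).
    rewrite Rabs_Rabsolu, Rabs_pos_eq; lra.
  - replace ((p + 2) / 2) with (c + 1) by (unfold c; field).
    set (ell := Rpower L c / mu).
    assert (Hell : 0 < ell) by (unfold ell; apply Rdiv_lt_0_compat; [apply exp_pos|lra]).
    apply is_lim_spec. intros eps. simpl.
    set (K := 1 + ell * (2 + 3 * be / mu)).
    assert (HK : 1 <= K) by (unfold K; assert (0 < be / mu) by (apply Rdiv_lt_0_compat; lra); nra).
    set (eta := Rmin (1/2) (Rmin (mu / (2 * be)) (eps / (2 * K)))).
    assert (He1 : eta <= 1/2) by apply Rmin_l.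
    assert (He2 : eta <= mu / (2 * be)) by (eapply Rle_trans; [apply Rmin_r|apply Rmin_l]).
    assert (He3 : eta <= eps / (2 * K)) by (eapply Rle_trans; [apply Rmin_r|apply Rmin_r]).
    assert (He0 : 0 < eta).
    { assert (Hep := cond_pos eps). unfold eta. apply Rmin_glb_lt; [lra|apply Rmin_glb_lt];
      apply Rdiv_lt_0_compat; lra. }
    assert (Hx : be * eta / mu <= 1 / 2).
    { apply (Rmult_le_compat_l be) in He2; [|lra].
      replace (be * (mu / (2 * be))) with (mu / 2) in He2 by (field; lra).
      unfold Rdiv. apply (Rmult_le_reg_r mu); [lra|]. rewrite Rmult_assoc, Rinv_l by lra. lra. }
    destruct (T_exists a gamma L c be eta ltac:(lra) Hpos HL He0 Hlim Hbec) as [T [HT [Hi Hii]]].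
    set (JT := RInt (fun s => Rpower (a s) (c + 1) * exp (mu * RInt a 0 s)) 0 T).
    set (psiT := Rpower T (- be) * exp (mu * RInt a 0 T)).
    assert (HpsiT : 0 < psiT) by (apply Rmult_lt_0_compat; apply exp_pos).
    assert (Hd0 : 0 < Rabs JT + psiT + 1) by (pose proof (Rabs_pos JT); lra).
    destruct (HG (eta / (Rabs JT + psiT + 1)) ltac:(apply Rdiv_lt_0_compat; lra)) as [M HM].
    exists (Rmax M T). intros t Ht.
    assert (Ht1 : M < t) by (pose proof (Rmax_l M T); lra).
    assert (Ht0 : T < t) by (pose proof (Rmax_r M T); lra).
    destruct (h_PC a mu (c + 1) Hpos Hdec Hpc (t + 1) ltac:(lra)) as [l [HPa HPh]].
    destruct (sandwich a L mu c be eta T t l HL Hmu Hbe He0 Hx He1 HT Ht0 Hpos Hdec Hpc HPa HPh Hi Hii)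
      as [S1 S2].
    fold JT psiT ell in S1, S2.
    rewrite (rewrite_F a mu c t Hpos Hdec Hpc ltac:(lra)).
    set (Jt := RInt (fun s => Rpower (a s) (c + 1) * exp (mu * RInt a 0 s)) 0 t) in *.
    set (psit := Rpower t (- be) * exp (mu * RInt a 0 t)) in *.
    specialize (HM t Ht1).
    set (g := Rpower t be * exp (- (mu * RInt a 0 t))) in *.
    assert (Hg0 : 0 < g) by (apply Rmult_lt_0_compat; apply exp_pos).
    assert (Hgpsi : g * psit = 1).
    { unfold g, psit. rewrite Rpower_Ropp, exp_Ropp.
      assert (0 < Rpower t be) by apply exp_pos. assert (0 < exp (mu * RInt a 0 t)) by apply exp_pos.
      field. lra. }
    replace (Rpower t be * (exp (- (mu * RInt a 0 t)) * Jt)) with (g * Jt) by (unfold g; ring).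
    set (u := g * Jt). set (j := g * JT). set (w := g * psiT).
    assert (Hw : 0 <= w < eta).
    { split; [unfold w; nra|].
      assert (g * (Rabs JT + psiT + 1) < eta).
      { apply (Rmult_lt_compat_r (Rabs JT + psiT + 1)) in HM; auto.
        unfold Rdiv in HM. rewrite Rmult_assoc, Rinv_l, Rmult_1_r in HM by lra. exact HM. }
      pose proof (Rabs_pos JT). unfold w. nra. }
    assert (Hj : Rabs j < eta).
    { assert (g * (Rabs JT + psiT + 1) < eta).
      { apply (Rmult_lt_compat_r (Rabs JT + psiT + 1)) in HM; auto.
        unfold Rdiv in HM. rewrite Rmult_assoc, Rinv_l, Rmult_1_r in HM by lra. exact HM. }
      unfold j. rewrite Rabs_mult, (Rabs_pos_eq g) by lra. nra. }
    apply Rabs_def2 in Hj.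
    assert (L1 : (1 - eta) * ell * (1 - w) <= u - j).
    { apply (Rmult_le_compat_l g) in S1; [|lra].
      replace (g * ((1 - eta) * ell * (psit - psiT))) with ((1 - eta) * ell * (g * psit - w)) in S1 by (unfold w; ring).
      rewrite Hgpsi in S1. unfold u, j. lra. }
    set (x := be * eta / mu) in *.
    assert (Hx0 : 0 <= x) by (unfold x; apply Rmult_le_pos; [nra|left; apply Rinv_0_lt_compat; lra]).
    assert (L2 : (1 - x) * (u - j) <= (1 + eta) * ell).
    { apply (Rmult_le_compat_l g) in S2; [|lra].
      replace (g * ((1 - x) * (Jt - JT))) with ((1 - x) * (u - j)) in S2 by (unfold u, j; ring).
      replace (g * ((1 + eta) * ell * (psit - psiT))) with ((1 + eta) * ell * (g * psit - w)) in S2 by (unfold w; ring).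
      rewrite Hgpsi in S2. assert (0 <= (1 + eta) * ell * w) by (apply Rmult_le_pos; [apply Rmult_le_pos|]; lra). lra. }
    assert (L3 : u - j <= (1 + 2 * x) * ((1 + eta) * ell)).
    { destruct (Rle_lt_dec (u - j) 0) as [Hn|Hn].
      - assert (0 <= (1 + 2 * x) * ((1 + eta) * ell)) by (apply Rmult_le_pos; [lra|apply Rmult_le_pos; lra]). lra.
      - assert (Hq1 : 0 <= x * (1 - 2 * x)) by (apply Rmult_le_pos; lra).
        assert (Hq2 : 0 <= (u - j) * (x * (1 - 2 * x))) by (apply Rmult_le_pos; lra).
        assert (u - j <= (1 + 2 * x) * ((1 - x) * (u - j))).
        { replace ((1 + 2 * x) * ((1 - x) * (u - j))) with ((u - j) + (u - j) * (x * (1 - 2 * x))) by ring. lra. }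
        assert ((1 + 2 * x) * ((1 - x) * (u - j)) <= (1 + 2 * x) * ((1 + eta) * ell)) by (apply Rmult_le_compat_l; lra).
        lra. }
    assert (Hxe : x = eta * (be / mu)) by (unfold x; field; lra).
    assert (Hbm : 0 < be / mu) by (apply Rdiv_lt_0_compat; lra).
    assert (HeK : eta * K <= eps / 2).
    { apply (Rmult_le_compat_r K) in He3; [|lra]. unfold Rdiv in He3 |- *.
      replace (eps * / (2 * K) * K) with (eps * / 2) in He3 by (field; lra). exact He3. }
    assert (Hep := cond_pos eps).
    assert (Hlow : ell - eta * K <= u).
    { assert (Hm1 : (1 - eta) * ell * (1 - eta) <= (1 - eta) * ell * (1 - w)).
      { apply Rmult_le_compat_l; [apply Rmult_le_pos|]; lra. }
      assert (Hm2 : 0 <= eta * ell * (3 * (be / mu))) by (apply Rmult_le_pos; [apply Rmult_le_pos|]; lra).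
      assert (Hm3 : 0 <= ell * eta * eta) by (apply Rmult_le_pos; [apply Rmult_le_pos|]; lra).
      assert (Heq : eta * K = eta + 2 * eta * ell + eta * ell * (3 * (be / mu))) by (unfold K; field; lra).
      assert (Heq2 : (1 - eta) * ell * (1 - eta) = ell - 2 * eta * ell + ell * eta * eta) by ring.
      lra. }
    assert (Hup : u <= ell + eta * K).
    { rewrite Hxe in L3.
      set (r := be / mu) in *.
      assert (Heq : (1 + 2 * (eta * r)) * ((1 + eta) * ell) = ell + eta * ell + 2 * eta * r * ell + 2 * (eta * r) * eta * ell) by ring.
      assert (Hm1 : 2 * (eta * r) * eta * ell <= eta * r * ell).
      { assert (0 <= eta * r * ell) by (apply Rmult_le_pos; [apply Rmult_le_pos|]; lra).
        replace (2 * (eta * r) * eta * ell) with ((2 * eta) * (eta * r * ell)) by ring.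
        replace (eta * r * ell) with (1 * (eta * r * ell)) at 2 by ring.
        apply Rmult_le_compat_r; lra. }
      assert (Hm2 : 0 <= eta * ell) by (apply Rmult_le_pos; lra).
      assert (Heq2 : eta * K = eta + 2 * eta * ell + 3 * eta * r * ell) by (unfold K, r; field; lra).
      lra. }
    apply Rabs_def1; lra.
Qed.
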